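(* For $t>0$ let $\tilde f_t(z)=\exp(-t/(z+1))$, $z\in\mathbb{C}_+$. Then \[\|\tilde f_t\|_{\mathcal{B}}=\begin{cases}2-e^{-t},&t\in(0,1],\\ 2-e^{-1}+e^{-1}\log t,&t>1.\end{cases}\]
   Context: $\mathbb{C}_+=\{\Re z>0\}$. For holomorphic $f$ on $\mathbb{C}_+$, $\|f\|_{\mathcal{B}}=\sup_{z\in\mathbb{C}_+}|f(z)|+\int_0^\infty\sup_{y\in\mathbb{R}}|f'(x+iy)|\,dx$. *)

(* Defs.v *)
From Stdlib Require Import Reals.
From Coquelicot Require Coquelicot.
From mathcomp Require Import all_boot all_order all_algebra.
From mathcomp Require Import all_classical all_reals all_analysis.
From mathcomp Require Import Rstruct Rstruct_topology.

Set Implicit Arguments.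
Unset Strict Implicit.
Unset Printing Implicit Defensive.

Notation C := Coquelicot.Complex.C.

Definition Cexp (z : C) : C :=
  (Rtrigo_def.exp (fst z) * Rtrigo_def.cos (snd z),
   Rtrigo_def.exp (fst z) * Rtrigo_def.sin (snd z))%R.

Definition is_cderiv (f : C -> C) (z l : C) : Prop :=
  @Coquelicot.Derive.is_derive Coquelicot.Complex.C_AbsRing
    Coquelicot.Complex.C_NormedModule f z l.

Local Open Scope classical_set_scope.
Local Open Scope ereal_scope.

Definition sup_half_plane (f : C -> C) : \bar R :=
  ereal_sup [set (Coquelicot.Complex.Cmod (f z))%:E | z in [set z : C | (0 < fst z)%R]].

Definition sup_deriv_line (f : C -> C) (x : R) : \bar R :=
  ereal_sup [set (Coquelicot.Complex.Cmod l)%:E | l in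
               [set l : C | exists y : R, is_cderiv f (x, y) l]].

Definition Bnorm (f : C -> C) : \bar R :=
  sup_half_plane f +
  \int[@lebesgue_measure R]_(x in `]0%R, +oo[) sup_deriv_line f x.

Definition ftilde (t : R) (z : C) : C :=
  Cexp (Coquelicot.Complex.Copp
          (Coquelicot.Complex.Cdiv (Coquelicot.Complex.RtoC t)
             (Coquelicot.Complex.Cplus z (Coquelicot.Complex.RtoC 1%R)))).

(* Main.v *)
Require Import Defs.
From Stdlib Require Import Reals.
From mathcomp Require Import all_boot all_order all_algebra.
From mathcomp Require Import all_classical all_reals all_analysis.
From mathcomp Require Import Rstruct Rstruct_topology.
From mathcomp Require Import measurable_realfun.
From Stdlib Require Lra.

Module CX.
From Coquelicot Require Import Coquelicot.
From Stdlib Require Import Reals Lra.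
Local Open Scope R_scope.
Notation CC := Complex.C.

Lemma sin_bnd b : 0 <= b <= 1 -> b - b^3/6 <= sin b <= b.
Proof.
intros Hb. destruct (pre_sin_bound b 0 ltac:(lra) ltac:(lra)) as [H1 H2].
assert (E1: sin_approx b (2 * 0 + 1) = b - b^3/6) by (unfold sin_approx, sin_term; simpl; field).
assert (E2: sin_approx b (2 * (0 + 1)) = b - b^3/6 + b^5/120) by (unfold sin_approx, sin_term; simpl; field).
rewrite E1 in H1. rewrite E2 in H2. split; [lra|].
assert (b^5 <= b^3). { assert (b^5 = b^3 * (b*b)) by ring. assert (0 <= b^3) by (apply pow_le; lra). assert (b^3 * (b*b) <= b^3 * 1) by (apply Rmult_le_compat_l; nra). lra. }
assert (0 <= b^3) by (apply pow_le; lra). lra.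
Qed.

Lemma cos_bnd b : -1 <= b <= 1 -> 1 - b^2/2 <= cos b <= 1.
Proof.
intros Hb. split; [|apply COS_bound].
destruct (pre_cos_bound b 0 ltac:(lra) ltac:(lra)) as [H1 H2].
assert (E1: cos_approx b (2 * 0 + 1) = 1 - b^2/2) by (unfold cos_approx, cos_term; simpl; field).
rewrite E1 in H1. lra.
Qed.

Lemma sin_bnd2 b : -1 <= b <= 1 -> Rabs (sin b - b) <= b^2 /\ Rabs (sin b) <= Rabs b.
Proof.
intros Hb. destruct (Rle_lt_dec 0 b) as [H|H].
- destruct (sin_bnd b ltac:(lra)) as [H1 H2].
  assert (b^3 <= b^2) by (simpl; nra). assert (b^2 <= b) by (simpl; nra).
  assert (0 <= b^3) by (apply pow_le; lra).
  split; [apply Rabs_le; lra|]. rewrite (Rabs_right b ltac:(lra)). apply Rabs_le; lra.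
- destruct (sin_bnd (-b) ltac:(lra)) as [H1 H2]. rewrite sin_neg in H1 H2.
  assert ((-b)^3 <= b^2) by (simpl; nra). assert (b^2 <= -b) by (simpl; nra).
  assert (0 <= (-b)^3) by (apply pow_le; lra).
  split; [apply Rabs_le; lra|]. rewrite (Rabs_left b ltac:(lra)). apply Rabs_le; lra.
Qed.

Lemma exp_bnd a : a <= 1/2 -> 0 <= exp a - 1 - a <= 2 * a^2.
Proof.
intros Ha. pose proof (exp_ineq1_le a). pose proof (exp_ineq1_le (-a)).
split; [lra|].
assert (exp a * exp (-a) = 1) by (rewrite <- exp_plus; replace (a + -a) with 0 by ring; apply exp_0).
assert (0 < exp a) by apply exp_pos.
assert (exp a * (1 - a) <= 1) by nra.
assert ((1 + a + 2*a^2) * (1 - a) >= 1) by (simpl; nra).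
assert (exp a <= 1 + a + 2 * a^2) by nra. lra.
Qed.
Lemma Cmod_sq (z : CC) : Cmod z ^ 2 = fst z ^ 2 + snd z ^ 2.
Proof. unfold Cmod. rewrite pow2_sqrt; [reflexivity|]. nra. Qed.

Lemma Cmod_le_sum (z : CC) : Cmod z <= Rabs (fst z) + Rabs (snd z).
Proof.
apply Rsqr_incr_0_var; [|pose proof (Rabs_pos (fst z)); pose proof (Rabs_pos (snd z)); lra].
unfold Rsqr. pose proof (Cmod_sq z). simpl in H.
pose proof (Rabs_pos (fst z)); pose proof (Rabs_pos (snd z)).
assert (Rabs (fst z) * Rabs (fst z) = fst z * fst z) by (rewrite <- Rabs_mult; apply Rabs_right; nra).
assert (Rabs (snd z) * Rabs (snd z) = snd z * snd z) by (rewrite <- Rabs_mult; apply Rabs_right; nra).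
nra.
Qed.

Lemma Cexp_eq (z : CC) : Cexp z = (Rmult (exp (fst z)) (cos (snd z)), Rmult (exp (fst z)) (sin (snd z))).
Proof. reflexivity. Qed.

Lemma Cexp_add (z h : CC) : Cexp (Cplus z h) = Cmult (Cexp z) (Cexp h).
Proof.
rewrite !Cexp_eq. destruct z as [a b], h as [c d]. unfold Cplus, Cmult; simpl.
rewrite exp_plus cos_plus sin_plus. f_equal; ring.
Qed.

Lemma Cmod_Cexp (z : CC) : Cmod (Cexp z) = exp (fst z).
Proof.
rewrite Cexp_eq. destruct z as [a b]. unfold Cmod; simpl.
replace ((exp a * cos b) * ((exp a * cos b) * 1) + (exp a * sin b) * ((exp a * sin b) * 1))
  with (exp a * exp a) by (pose proof (sin2_cos2 b); unfold Rsqr in H; nra).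
apply sqrt_square. apply Rlt_le, exp_pos.
Qed.

Lemma Cexp_err (h : CC) : Cmod h < 1/2 -> Cmod (Cminus (Cminus (Cexp h) (RtoC 1)) h) <= 3 * Cmod h ^ 2.
Proof.
intros Hh. destruct h as [a b].
pose proof (Cmod_sq (a,b)) as Hs. simpl fst in Hs. simpl snd in Hs.
pose proof (Rmax_Cmod (a,b)) as Hm. simpl fst in Hm; simpl snd in Hm.
assert (Ha: Rabs a < 1/2) by (eapply Rle_lt_trans; [apply Rmax_l|]; eapply Rle_lt_trans; [apply Hm|exact Hh]).
assert (Hb: Rabs b < 1/2) by (eapply Rle_lt_trans; [apply Rmax_r|]; eapply Rle_lt_trans; [apply Hm|exact Hh]).
apply Rabs_def2 in Ha. apply Rabs_def2 in Hb.
rewrite Hs.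
eapply Rle_trans; [apply Cmod_le_sum|]. rewrite Cexp_eq. unfold Cminus, Cplus, Copp, RtoC; simpl.
destruct (exp_bnd a ltac:(lra)) as [E1 E2].
destruct (cos_bnd b ltac:(lra)) as [C1 C2].
destruct (sin_bnd2 b ltac:(lra)) as [S1 S2].
assert (0 < exp a) by apply exp_pos.
assert (exp a <= 2) by (simpl in E2; nra).
assert (R1: Rabs (exp a * cos b + - (1) + - a) <= 2 * a^2 + b^2).
{ replace (exp a * cos b + - (1) + - a) with ((exp a - 1 - a) + exp a * (cos b - 1)) by ring.
  eapply Rle_trans; [apply Rabs_triang|].
  rewrite Rabs_mult (Rabs_right (exp a)); [|lra].
  rewrite (Rabs_right (exp a - 1 - a)); [|lra].
  rewrite (Rabs_left1 (cos b - 1)); [|lra]. simpl in *. nra. }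
assert (R2: Rabs (exp a * sin b + - 0 + - b) <= a^2 + 2 * b^2).
{ replace (exp a * sin b + - 0 + - b) with ((exp a - 1) * sin b + (sin b - b)) by ring.
  eapply Rle_trans; [apply Rabs_triang|].
  rewrite Rabs_mult.
  assert (Rabs (exp a - 1) <= 2 * Rabs a).
  { apply Rabs_le. destruct (Rle_lt_dec 0 a).
    - rewrite Rabs_right; [|lra]. simpl in E2. split; nra.
    - rewrite Rabs_left; [|lra]. simpl in E2. split; nra. }
  assert (Rabs (exp a - 1) * Rabs (sin b) <= 2 * Rabs a * Rabs b).
  { apply Rmult_le_compat; auto using Rabs_pos. }
  assert (2 * Rabs a * Rabs b <= a^2 + b^2).
  { pose proof (Rabs_pos a); pose proof (Rabs_pos b).
    assert (Rabs a * Rabs a = a^2) by (replace (a^2) with (a*a) by ring; rewrite <- Rabs_mult; apply Rabs_right; nra).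
    assert (Rabs b * Rabs b = b^2) by (replace (b^2) with (b*b) by ring; rewrite <- Rabs_mult; apply Rabs_right; nra).
    assert (0 <= (Rabs a - Rabs b)*(Rabs a - Rabs b)) by apply Rle_0_sqr.
    nra. }
  lra. }
lra.
Qed.
Lemma test_ring (a b c : CC) : Cplus a (Cminus b a) = b.
Proof. ring. Qed.
Lemma Cplus0r (a : CC) : Cplus a (RtoC 0) = a.
Proof. ring. Qed.
Lemma Cminus_plus (z r : CC) : Cminus (Cplus z r) z = r.
Proof. ring. Qed.
Lemma C_diff_id (A B h l1 l2 : CC) : Cmult h (Cminus l1 l2) = Cplus (Cminus (Cminus A B) (Cmult h l2)) (Copp (Cminus (Cminus A B) (Cmult h l1))).
Proof. ring. Qed.

Lemma quad_deriv (f : CC -> CC) z l d K : 0 < d -> 0 <= K ->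
  (forall h, Cmod h < d -> Cmod (Cminus (Cminus (f (Cplus z h)) (f z)) (Cmult h l)) <= K * Cmod h ^ 2) ->
  is_cderiv f z l.
Proof.
intros Hd HK H. unfold is_cderiv, is_derive, filterdiff. split.
{ apply is_linear_scal_l. }
intros x Hx. pose proof (@is_filter_lim_locally_unique C_AbsRing (AbsRing_NormedModule C_AbsRing) z x Hx) as Hzx. subst x.
intros eps.
assert (Hr: 0 < Rmin d (eps/(K+1))).
{ apply Rmin_pos; [lra|]. apply Rdiv_lt_0_compat; [apply cond_pos|lra]. }
exists (mkposreal _ Hr). intros y Hy.
change (Cmod (Cminus (Cminus (f y) (f z)) (Cmult (Cminus y z) l)) <= eps * Cmod (Cminus y z)).
change (Cmod (Cminus y z) < Rmin d (eps / (K + 1))) in Hy.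
assert (Hy1: Cmod (Cminus y z) < d) by (eapply Rlt_le_trans; [exact Hy|apply Rmin_l]).
assert (Hy2: Cmod (Cminus y z) < eps / (K+1)) by (eapply Rlt_le_trans; [exact Hy|apply Rmin_r]).
specialize (H _ Hy1). rewrite (test_ring z y z) in H.
eapply Rle_trans; [exact H|].
set (m := Cmod (Cminus y z)) in *.
assert (0 <= m) by apply Cmod_ge_0.
assert (m * (K+1) < eps).
{ apply (Rmult_lt_compat_r (K+1)) in Hy2; [|lra]. unfold Rdiv in Hy2. rewrite Rmult_assoc Rinv_l in Hy2; lra. }
pose proof (cond_pos eps). simpl. nra.
Qed.

Lemma quad_deriv2 (f : CC -> CC) z l d K : 0 < d -> 0 <= K ->
  (forall h, Cmod h < d -> Cmod (Cminus (Cminus (f (Cplus z h)) (f z)) (Cmult h l)) <= K * Cmod h ^ 2) ->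
  @is_derive C_AbsRing (AbsRing_NormedModule C_AbsRing) f z l.
Proof.
intros Hd HK H. unfold is_derive, filterdiff. split.
{ apply is_linear_scal_l. }
intros x Hx. pose proof (@is_filter_lim_locally_unique C_AbsRing (AbsRing_NormedModule C_AbsRing) z x Hx) as Hzx. subst x.
intros eps.
assert (Hr: 0 < Rmin d (eps/(K+1))).
{ apply Rmin_pos; [lra|]. apply Rdiv_lt_0_compat; [apply cond_pos|lra]. }
exists (mkposreal _ Hr). intros y Hy.
change (Cmod (Cminus (Cminus (f y) (f z)) (Cmult (Cminus y z) l)) <= eps * Cmod (Cminus y z)).
change (Cmod (Cminus y z) < Rmin d (eps / (K + 1))) in Hy.
assert (Hy1: Cmod (Cminus y z) < d) by (eapply Rlt_le_trans; [exact Hy|apply Rmin_l]).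
assert (Hy2: Cmod (Cminus y z) < eps / (K+1)) by (eapply Rlt_le_trans; [exact Hy|apply Rmin_r]).
specialize (H _ Hy1). rewrite (test_ring z y z) in H.
eapply Rle_trans; [exact H|].
set (m := Cmod (Cminus y z)) in *.
assert (0 <= m) by apply Cmod_ge_0.
assert (m * (K+1) < eps).
{ apply (Rmult_lt_compat_r (K+1)) in Hy2; [|lra]. unfold Rdiv in Hy2. rewrite Rmult_assoc Rinv_l in Hy2; lra. }
pose proof (cond_pos eps). simpl. nra.
Qed.

Lemma cderiv_unique f z l1 l2 : is_cderiv f z l1 -> is_cderiv f z l2 -> l1 = l2.
Proof.
intros [_ H1] [_ H2].
assert (Hz : is_filter_lim (locally z) z) by (intros P HP; exact HP).
destruct (Req_dec (Cmod (Cminus l1 l2)) 0) as [E|E].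
{ apply Cmod_eq_0 in E. rewrite -(test_ring l2 l1 l2) E. apply Cplus0r. }
pose proof (Cmod_ge_0 (Cminus l1 l2)).
assert (Hm: 0 < Cmod (Cminus l1 l2) / 4) by lra.
specialize (H1 z (fun P HP => HP) (mkposreal _ Hm)). specialize (H2 z (fun P HP => HP) (mkposreal _ Hm)).
pose proof (filter_and _ _ H1 H2) as H3.
destruct H3 as [r Hr].
set (y := Cplus z (RtoC (r/2))).
assert (Hy : Cminus y z = RtoC (r/2)) by (unfold y; apply Cminus_plus).
assert (Hr2 : Cmod (RtoC (r/2)) = r/2) by (rewrite Cmod_R; apply Rabs_right; pose proof (cond_pos r); lra).
destruct (Hr y) as [A B].
{ change (Cmod (Cminus y z) < r). rewrite Hy Hr2. pose proof (cond_pos r); lra. }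
change (Cmod (Cminus (Cminus (f y) (f z)) (Cmult (Cminus y z) l1)) <= Cmod (Cminus l1 l2) / 4 * Cmod (Cminus y z)) in A.
change (Cmod (Cminus (Cminus (f y) (f z)) (Cmult (Cminus y z) l2)) <= Cmod (Cminus l1 l2) / 4 * Cmod (Cminus y z)) in B.
assert (T: Cmod (Cmult (Cminus y z) (Cminus l1 l2)) <= Cmod (Cminus (Cminus (f y) (f z)) (Cmult (Cminus y z) l2)) + Cmod (Cminus (Cminus (f y) (f z)) (Cmult (Cminus y z) l1))).
{ rewrite (C_diff_id (f y) (f z)).
  eapply Rle_trans; [apply Cmod_triangle|]. rewrite Cmod_opp. lra. }
rewrite Cmod_mult Hy Hr2 in T. rewrite Hy Hr2 in A B.
pose proof (cond_pos r). exfalso. nra.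
Qed.
Lemma Cexp_id (A B h : CC) : Cminus (Cminus (Cmult A B) A) (Cmult h A) = Cmult A (Cminus (Cminus B (RtoC 1)) h).
Proof. ring. Qed.

Lemma Cexp_deriv z : is_cderiv Cexp z (Cexp z).
Proof.
apply (quad_deriv Cexp z (Cexp z) (1/2) (3 * Cmod (Cexp z))); [lra| pose proof (Cmod_ge_0 (Cexp z)); lra |].
intros h Hh. rewrite Cexp_add Cexp_id Cmod_mult.
pose proof (Cexp_err h Hh). pose proof (Cmod_ge_0 (Cexp z)).
replace (3 * Cmod (Cexp z) * Cmod h ^ 2) with (Cmod (Cexp z) * (3 * Cmod h ^ 2)) by ring.
apply Rmult_le_compat_l; auto.
Qed.

Definition gfun (t : R) (z : CC) : CC := Copp (Cdiv (RtoC t) (Cplus z (RtoC 1))).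

Lemma g_id (t : R) (z h : CC) : Cplus z (RtoC 1) <> RtoC 0 -> Cplus (Cplus z (RtoC 1)) h <> RtoC 0 ->
  Cminus (Cminus (gfun t (Cplus z h)) (gfun t z)) (Cmult h (Cdiv (RtoC t) (Cmult (Cplus z (RtoC 1)) (Cplus z (RtoC 1)))))
  = Copp (Cdiv (Cmult (RtoC t) (Cmult h h)) (Cmult (Cmult (Cplus z (RtoC 1)) (Cplus z (RtoC 1))) (Cplus (Cplus z (RtoC 1)) h))).
Proof.
intros H1 H2. unfold gfun. replace (Cplus (Cplus z h) (RtoC 1)) with (Cplus (Cplus z (RtoC 1)) h) by ring.
field. split; auto.
Qed.

Lemma g_deriv t z : 0 < t -> Cplus z (RtoC 1) <> RtoC 0 ->
  @is_derive C_AbsRing (AbsRing_NormedModule C_AbsRing) (gfun t) z (Cdiv (RtoC t) (Cmult (Cplus z (RtoC 1)) (Cplus z (RtoC 1)))).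
Proof.
intros Ht Hw.
set (w := Cplus z (RtoC 1)) in *.
assert (Hm: 0 < Cmod w).
{ pose proof (Cmod_ge_0 w). destruct (Req_dec (Cmod w) 0) as [E|E]; [|lra].
  apply Cmod_eq_0 in E. contradiction. }
set (m := Cmod w) in *.
apply (quad_deriv2 (gfun t) z _ (m/2) (2 * t / (m^3))).
{ lra. }
{ apply Rlt_le. apply Rdiv_lt_0_compat; [lra|]. apply pow_lt; lra. }
intros h Hh.
assert (Hwh: m/2 < Cmod (Cplus w h)).
{ pose proof (Cmod_triangle (Cplus w h) (Copp h)). rewrite Cmod_opp in H.
  replace (Cplus (Cplus w h) (Copp h)) with w in H by ring. fold m in H. lra. }
assert (Hwh0: Cplus w h <> RtoC 0).
{ intros E. rewrite E Cmod_0 in Hwh. lra. }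
rewrite g_id; auto.
rewrite Cmod_opp Cmod_div.
2:{ intros E. apply (f_equal Cmod) in E. rewrite !Cmod_mult Cmod_0 in E. fold w m in E.
     assert (0 < m * m * Cmod (Cplus w h)) by (apply Rmult_lt_0_compat; nra). lra. }
rewrite !Cmod_mult Cmod_R Rabs_right; [|lra]. fold w m.
set (q := Cmod (Cplus w h)) in *.
pose proof (Cmod_ge_0 h).
assert (0 < m * m * q) by (apply Rmult_lt_0_compat; [nra|lra]).
assert (/ (m * m * q) <= 2 / m^3).
{ replace (2 / m^3) with (/ (m^3/2)) by (field; lra).
  apply Rinv_le_contravar. { simpl. assert (0 < m * m * m) by (apply Rmult_lt_0_compat; nra). lra. }
  simpl. assert (m * m * (m/2) <= m * m * q) by (apply Rmult_le_compat_l; nra). lra. }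
unfold Rdiv. 
replace (t * (Cmod h * Cmod h) * / (m * m * q)) with ((t * Cmod h ^ 2) * / (m * m * q)) by ring.
replace (2 * t * / m ^ 3 * Cmod h ^ 2) with ((t * Cmod h ^ 2) * (2 / m^3)) by (unfold Rdiv; ring).
apply Rmult_le_compat_l; auto.
apply Rmult_le_pos; [lra| apply pow2_ge_0].
Qed.
Lemma ftilde_eq t : ftilde t = fun z => Cexp (gfun t z).
Proof. reflexivity. Qed.

Lemma ftilde_deriv t z : 0 < t -> Cplus z (RtoC 1) <> RtoC 0 ->
  is_cderiv (ftilde t) z (Cmult (Cdiv (RtoC t) (Cmult (Cplus z (RtoC 1)) (Cplus z (RtoC 1)))) (Cexp (gfun t z))).
Proof.
intros Ht Hw. rewrite ftilde_eq.
exact (is_derive_comp Cexp (gfun t) z (Cexp (gfun t z)) _ (Cexp_deriv _) (g_deriv t z Ht Hw)).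
Qed.

Lemma gfun_fst t x y : 0 < x + 1 -> fst (gfun t (x, y)) = - t * (x + 1) / ((x+1)^2 + y^2).
Proof.
intros Hx. unfold gfun, Cdiv, Cplus, Cmult, Cinv, Copp, RtoC. simpl. field.
assert (0 < (x+1)*(x+1) + y*y) by nra. lra.
Qed.

Lemma Cmod_w x y : Cmod (Cplus (x, y) (RtoC 1)) ^ 2 = (x+1)^2 + y^2.
Proof. rewrite Cmod_sq. simpl. ring. Qed.

Lemma ftilde_mod t x y : 0 < x + 1 -> Cmod (ftilde t (x, y)) = exp (- t * (x + 1) / ((x+1)^2 + y^2)).
Proof. intros Hx. rewrite ftilde_eq Cmod_Cexp gfun_fst; auto. Qed.

Lemma w_nz x y : 0 < x + 1 -> Cplus (x, y) (RtoC 1) <> RtoC 0.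
Proof.
intros Hx E. apply (f_equal fst) in E. simpl in E. lra.
Qed.

Lemma ftilde_deriv_mod t x y : 0 < t -> 0 < x + 1 ->
  (exists l, is_cderiv (ftilde t) (x, y) l) /\
  (forall l, is_cderiv (ftilde t) (x, y) l -> Cmod l = t / ((x+1)^2 + y^2) * exp (- t * (x + 1) / ((x+1)^2 + y^2))).
Proof.
intros Ht Hx. pose proof (ftilde_deriv t (x, y) Ht (w_nz x y Hx)) as Hd.
split; [eexists; exact Hd|].
intros l Hl. rewrite (cderiv_unique _ _ _ _ Hl Hd).
rewrite Cmod_mult Cmod_Cexp gfun_fst; auto. f_equal.
rewrite Cmod_div. 2:{ intros E. apply (f_equal Cmod) in E. rewrite Cmod_mult Cmod_0 in E.
  pose proof (Cmod_w x y). simpl in H. assert (0 < (x+1)*(x+1) + y*y) by nra. lra. }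
rewrite Cmod_mult Cmod_R Rabs_right; [|lra].
  pose proof (Cmod_w x y) as H. rewrite -H. simpl. rewrite Rmult_1_r. reflexivity.
Qed.
Definition g1 (x : R) : R := exp (-1) / (x + 1).
Definition g2 (t x : R) : R := t / ((x + 1) * (x + 1)) * exp (- (t / (x + 1))).
Definition F1 (t x : R) : R := exp (- (t / (x + 1))).
Definition F2 (x : R) : R := exp (-1) * ln (x + 1).

Lemma F1_der t x : -1 < x -> derivable_pt_lim (F1 t) x (g2 t x).
Proof.
intros Hx. apply is_derive_Reals. unfold F1, g2. auto_derive.
- lra.
- unfold Rdiv. field. lra.
Qed.

Lemma F2_der x : -1 < x -> derivable_pt_lim F2 x (g1 x).
Proof.
intros Hx. apply is_derive_Reals. unfold F2, g1. auto_derive.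
- lra.
- unfold Rdiv. field. lra.
Qed.

Lemma g1_cont x : -1 < x -> continuity_pt g1 x.
Proof.
intros Hx. apply continuity_pt_filterlim. apply: ex_derive_continuous. unfold g1. auto_derive. lra.
Qed.

Lemma g2_cont t x : -1 < x -> continuity_pt (g2 t) x.
Proof.
intros Hx. apply continuity_pt_filterlim. apply: ex_derive_continuous. unfold g2. auto_derive. split; [nra|split; [lra|exact I]].
Qed.

Lemma F1_cont t x : -1 < x -> continuity_pt (F1 t) x.
Proof. intros Hx. apply derivable_continuous_pt. exists (g2 t x). apply F1_der; auto. Qed.
Lemma F2_cont x : -1 < x -> continuity_pt F2 x.
Proof. intros Hx. apply derivable_continuous_pt. exists (g1 x). apply F2_der; auto. Qed.
Definition hval (t x : R) : R := if Rle_dec (x + 1) t then g1 x else g2 t x.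
Definition kf (t x y : R) : R := t / ((x+1)^2 + y^2) * exp (- t * (x + 1) / ((x+1)^2 + y^2)).

Lemma key1 u : 0 < u -> u * exp (- u) <= exp (-1).
Proof.
intros Hu. pose proof (exp_ineq1_le (u - 1)).
assert (exp (u - 1) * exp (- u) = exp (-1)) by (rewrite <- exp_plus; f_equal; ring).
pose proof (exp_pos (-u)). nra.
Qed.

Lemma key2 u v : 0 <= u -> u <= v -> v <= 1 -> u * exp (- u) <= v * exp (- v).
Proof.
intros H1 H2 H3. pose proof (exp_ineq1_le (u - v)).
assert (exp (u - v) * exp (- u) = exp (- v)) by (rewrite <- exp_plus; f_equal; ring).
pose proof (exp_pos (-u)).
assert (u <= v * exp (u - v)) by nra.
rewrite <- H0. nra.
Qed.

Lemma kf_eq t x y : 0 < x + 1 -> kf t x y = (t * (x+1) / ((x+1)^2 + y^2)) * exp (- (t * (x+1) / ((x+1)^2 + y^2))) / (x + 1).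
Proof.
intros Hx. unfold kf. assert (0 < (x+1)^2 + y^2) by (simpl; nra).
replace (- t * (x + 1) / ((x + 1) ^ 2 + y ^ 2)) with (- (t * (x+1) / ((x+1)^2 + y^2))) by (field; lra).
field. lra.
Qed.

Lemma kf_le t x y : 0 < t -> 0 < x + 1 -> kf t x y <= hval t x.
Proof.
intros Ht Hx. rewrite kf_eq; auto.
assert (HD: 0 < (x+1)^2 + y^2) by (simpl; nra).
set (u := t * (x + 1) / ((x + 1) ^ 2 + y ^ 2)).
assert (Hu: 0 < u) by (unfold u; apply Rdiv_lt_0_compat; nra).
unfold hval. destruct (Rle_dec (x + 1) t) as [H|H].
- unfold g1. unfold Rdiv. apply Rmult_le_compat_r. { apply Rlt_le, Rinv_0_lt_compat; lra. }
  apply key1; auto.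
- unfold g2.
  assert (E: t / ((x + 1) * (x + 1)) * exp (- (t / (x + 1))) = (t / (x+1)) * exp (- (t / (x+1))) / (x + 1)) by (field; lra).
  rewrite E. unfold Rdiv at 1 3. apply Rmult_le_compat_r. { apply Rlt_le, Rinv_0_lt_compat; lra. }
  apply key2; [lra| |].
  + unfold u. apply Rmult_le_reg_r with ((x+1)^2 + y^2); auto.
    unfold Rdiv. rewrite Rmult_assoc Rinv_l; [|lra]. 
    replace (t * / (x + 1) * ((x + 1) ^ 2 + y ^ 2)) with (t * (x+1) + t * y^2 / (x+1)) by (field; lra).
    assert (0 <= t * y^2 / (x+1)). { apply Rmult_le_pos; [|apply Rlt_le, Rinv_0_lt_compat; lra]. apply Rmult_le_pos; [lra|]. apply pow2_ge_0. }
    lra.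
  + apply Rmult_le_reg_r with (x+1); auto. unfold Rdiv. rewrite Rmult_assoc Rinv_l; lra.
Qed.

Lemma kf_att t x : 0 < t -> 0 < x + 1 -> exists y, kf t x y = hval t x.
Proof.
intros Ht Hx. unfold hval. destruct (Rle_dec (x + 1) t) as [H|H].
- exists (sqrt (t * (x+1) - (x+1)^2)).
  assert (E: sqrt (t * (x+1) - (x+1)^2) ^ 2 = t * (x+1) - (x+1)^2).
  { apply pow2_sqrt. simpl. nra. }
  rewrite kf_eq; auto. rewrite E.
  replace (t * (x + 1) / ((x + 1) ^ 2 + (t * (x + 1) - (x + 1) ^ 2))) with 1 by (field; nra).
  cbn [is_left]. unfold g1. replace (- (1)) with (-1) by ring. lra.
- exists 0. rewrite kf_eq; auto. unfold g2.
  replace (t * (x + 1) / ((x + 1) ^ 2 + 0 ^ 2)) with (t / (x+1)) by (field; lra).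
  cbn [is_left]. field. lra.
Qed.
Lemma exp_le1 t x y : 0 < t -> 0 < x + 1 -> exp (- t * (x + 1) / ((x+1)^2 + y^2)) <= 1.
Proof.
intros Ht Hx.
assert (0 < (x+1)^2 + y^2) by (simpl; nra).
assert (0 < t * (x + 1) / ((x+1)^2 + y^2)) by (apply Rdiv_lt_0_compat; [apply Rmult_lt_0_compat; lra|lra]).
replace (- t * (x + 1) / ((x+1)^2 + y^2)) with (- (t * (x + 1) / ((x+1)^2 + y^2))) by (field; lra).
pose proof (exp_increasing (- (t * (x + 1) / ((x+1)^2 + y^2))) 0 ltac:(lra)) as He. rewrite exp_0 in He. lra.
Qed.

Lemma approx1 t e : 0 < t -> 0 < e -> 0 < t / e /\ 1 - e <= exp (- t * (t / e + 1) / ((t / e + 1)^2 + 0^2)).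
Proof.
intros Ht He. assert (Hx: 0 < t / e) by (apply Rdiv_lt_0_compat; auto). split; auto.
set (x := t / e) in *.
replace (- t * (x + 1) / ((x + 1) ^ 2 + 0 ^ 2)) with (- (t / (x+1))) by (field; lra).
pose proof (exp_ineq1_le (- (t / (x+1)))).
assert (t / (x + 1) <= e).
{ apply Rmult_le_reg_r with (x+1); [lra|]. unfold Rdiv. rewrite Rmult_assoc Rinv_l; [|lra].
  unfold x. unfold Rdiv. replace (e * (t * / e + 1)) with (t + e) by (field; lra). lra. }
lra.
Qed.

Lemma hval_ge0 t x : 0 < t -> 0 < x + 1 -> 0 <= hval t x.
Proof.
intros Ht Hx. destruct (kf_att t x Ht Hx) as [y <-]. unfold kf.
assert (0 < (x+1)^2 + y^2) by (simpl; nra).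
apply Rmult_le_pos; [apply Rlt_le, Rdiv_lt_0_compat; auto|apply Rlt_le, exp_pos].
Qed.

Lemma g2_ge0 t x : 0 < t -> -1 < x -> 0 <= g2 t x.
Proof.
intros Ht Hx. unfold g2. apply Rmult_le_pos; [|apply Rlt_le, exp_pos].
apply Rlt_le, Rdiv_lt_0_compat; [lra|]. apply Rmult_lt_0_compat; lra.
Qed.

Lemma g1_ge0 x : -1 < x -> 0 <= g1 x.
Proof.
intros Hx. unfold g1. apply Rlt_le, Rdiv_lt_0_compat; [apply exp_pos|lra].
Qed.

Lemma F1_lim_bound t e x : 0 < t -> 0 < e -> t / e < x -> Rabs (1 - F1 t x) < e.
Proof.
intros Ht He Hx. unfold F1.
assert (0 < t / e) by (apply Rdiv_lt_0_compat; auto).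
assert (Hu: t / (x + 1) < e).
{ apply Rmult_lt_reg_r with (x+1); [lra|]. unfold Rdiv. rewrite Rmult_assoc Rinv_l; [|lra].
  assert (t = (t / e) * e) by (field; lra). nra. }
assert (Hu0: 0 < t / (x + 1)) by (apply Rdiv_lt_0_compat; lra).
pose proof (exp_ineq1_le (- (t / (x + 1)))).
pose proof (exp_increasing (- (t / (x + 1))) 0 ltac:(lra)) as He2. rewrite exp_0 in He2.
apply Rabs_def1; lra.
Qed.

Lemma F1_0 t : F1 t 0 = exp (- t).
Proof. unfold F1. f_equal. field. Qed.

Lemma F1_tm1 t : 0 < t -> F1 t (t - 1) = exp (-1).
Proof. intros Ht. unfold F1. f_equal. replace (t - 1 + 1) with t by ring. field. lra. Qed.

Lemma F2_0 : F2 0 = 0.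
Proof. unfold F2. replace (0 + 1) with 1 by ring. rewrite ln_1. ring. Qed.

Lemma F2_tm1 t : F2 (t - 1) = exp (-1) * ln t.
Proof. unfold F2. replace (t - 1 + 1) with t by ring. reflexivity. Qed.
End CX.

Local Open Scope ring_scope.
Import Order.TTheory GRing.Theory Num.Theory.
Import numFieldNormedType.Exports.
Local Open Scope classical_set_scope.
Local Open Scope ereal_scope.

Lemma sup_half t : (0 < t)%R -> sup_half_plane (ftilde t) = 1%:E.
Proof.
move=> ht0. have ht : (0 < t)%coqR by apply/RltP.
apply/eqP; rewrite eq_le; apply/andP; split.
- apply/ereal_supP => _ [[x y] /= hz <-]. rewrite lee_fin.
  have hx0 : (0 < x)%coqR by apply/RltP.
  have hx : (0 < x + 1)%coqR by Lra.lra.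
  rewrite CX.ftilde_mod //.
  apply/RleP. exact: CX.exp_le1.
- apply/lee_subgt0Pr => e e0. have e0' : (0 < e)%coqR by apply/RltP.
  have [hx hb] := CX.approx1 t e ht e0'.
  apply: le_ereal_sup_tmp. exists (Coquelicot.Complex.Cmod (ftilde t (Rdiv t e, 0%coqR)))%:E.
    by exists (Rdiv t e, 0%coqR) => //=; apply/RltP.
  rewrite -EFinB lee_fin CX.ftilde_mod; last by Lra.lra.
  by apply/RleP.
Qed.

Lemma sup_line t x : (0 < t)%coqR -> (0 < x + 1)%coqR ->
  sup_deriv_line (ftilde t) x = (CX.hval t x)%:E.
Proof.
move=> ht hx.
apply/eqP; rewrite eq_le; apply/andP; split.
- apply/ereal_supP => _ [l [y hl] <-]. rewrite lee_fin.
  rewrite ((CX.ftilde_deriv_mod t x y ht hx).2 l hl).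
  apply/RleP. exact: CX.kf_le.
- have [y hy] := CX.kf_att t x ht hx.
  have [[l hl] hm] := CX.ftilde_deriv_mod t x y ht hx.
  apply: ereal_sup_ubound. exists l; first by exists y.
  by rewrite (hm l hl) -hy.
Qed.

Lemma bridge (f : R -> R) x l : derivable_pt_lim f x l -> derivable (f : R^o -> R^o) x 1 /\ (f : R^o -> R^o)^`() x = l.
Proof.
move=> hf. split.
- rewrite /derivable. apply/cvg_ex. exists l.
  apply/cvgrPdist_lt => e e0.
  have e0' : (0 < e)%coqR by apply/RltP.
  have [d hd] := hf e e0'.
  apply/nbhs_ballP; exists (pos d); first by apply/RltP; exact: cond_pos d.
  move=> h /= hball hneq.
  have hn : h <> 0%coqR by move=> h0; move: hneq; rewrite h0 eqxx.
  have hb : (Rabs h < d)%coqR by move: hball; rewrite /ball /= sub0r normrN => /RltP; rewrite RabsE.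
  have := hd h hn hb.
  rewrite RabsE => /RltP; rewrite distrC.
  have -> : (h%:A : R^o) = h by rewrite /GRing.scale /= mulr1.
  rewrite (addrC h x) RdivE RminusE => H. rewrite /GRing.scale /= mulrC. exact H.
- rewrite derive1E /derive. apply: cvg_lim => //.
  apply/cvgrPdist_lt => e e0.
  have e0' : (0 < e)%coqR by apply/RltP.
  have [d hd] := hf e e0'.
  apply/nbhs_ballP; exists (pos d); first by apply/RltP; exact: cond_pos d.
  move=> h /= hball hneq.
  have hn : h <> 0%coqR by move=> h0; move: hneq; rewrite h0 eqxx.
  have hb : (Rabs h < d)%coqR by move: hball; rewrite /ball /= sub0r normrN => /RltP; rewrite RabsE.
  have := hd h hn hb.
  rewrite RabsE => /RltP; rewrite distrC.
  have -> : (h%:A : R^o) = h by rewrite /GRing.scale /= mulr1.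
  rewrite (addrC h x) RdivE RminusE => H. rewrite /GRing.scale /= mulrC. exact H.
Qed.

Lemma meas_on (f : Real.sort R -> Real.sort R) (D : set (Real.sort R)) : measurable D -> D `<=` `](-1)%R, +oo[ ->
  (forall x, (-1 < x)%coqR -> continuity_pt f x) -> measurable_fun D f.
Proof.
move=> mD DE cf.
apply: (measurable_funS _ DE) => //.
apply: open_continuous_measurable_fun; first exact: interval_open.
move=> x; rewrite inE /= in_itv /= andbT => /RltP hx.
apply/continuity_pt_cvg. apply: cf. exact: hx.
Qed.

Lemma int_case1 t : (0 < t)%coqR -> (t <= 1)%coqR ->
  \int[lebesgue_measure]_(x in `]0%R, +oo[) sup_deriv_line (ftilde t) x = (1 - exp (- t))%coqR%:E.
Proof.
move=> ht ht1.
transitivity (\int[lebesgue_measure]_(x in `]0%R, +oo[) (CX.g2 t x)%:E).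
  apply: eq_integral => x; rewrite inE /= in_itv /= andbT => /RltP hx.
  have {}hx : (0 < x)%coqR := hx.
  rewrite sup_line //; last by Lra.lra.
  congr EFin. rewrite /CX.hval. case: Rle_dec => // h. exfalso. Lra.lra.
rewrite integral_itv_obnd_cbnd; last first.
  apply/measurable_EFinP. apply: meas_on => //.
  - move=> x /=; rewrite !in_itv /= !andbT => /RltP hx. have {}hx : (0 < x)%coqR := hx.
    apply/RltP. have : (-1 < x)%coqR by Lra.lra. exact.
  - move=> x hx. exact: CX.g2_cont.
rewrite (@ge0_continuous_FTC2y R (CX.g2 t) (CX.F1 t) 0 1).
- by rewrite CX.F1_0 -EFinB.
- move=> x /RleP hx. have {}hx : (0 <= x)%coqR := hx. apply/RleP. apply: CX.g2_ge0 => //. Lra.lra.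
- apply: continuous_in_subspaceT => x; rewrite inE /= in_itv /= andbT => /RleP hx.
  have {}hx : (0 <= x)%coqR := hx.
  apply/continuity_pt_cvg. apply: CX.g2_cont. Lra.lra.
- apply/cvgrPdist_lt => e e0. have e0' : (0 < e)%coqR by apply/RltP.
  exists (Rdiv t e); split; first by rewrite num_real.
  move=> x /RltP hx. rewrite -RabsE. apply/RltP. exact: CX.F1_lim_bound.
- move=> x /RltP hx. have {}hx : (0 < x)%coqR := hx. have hx1 : (-1 < x)%coqR by Lra.lra. exact: (@bridge _ _ _ (CX.F1_der t x hx1)).1.
- apply: cvg_at_right_filter. apply/continuity_pt_cvg. apply: CX.F1_cont. have h : (-1 < 0)%coqR by Lra.lra. exact h.
- move=> x; rewrite in_itv /= andbT => /RltP hx. have {}hx : (0 < x)%coqR := hx. have hx1 : (-1 < x)%coqR by Lra.lra. exact: (@bridge _ _ _ (CX.F1_der t x hx1)).2.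
Qed.

Ltac tostd := rewrite -?R0E -?R1E -?RminusE -?RoppE -?RplusE -?RmultE -?RdivE -?RinvE.
Ltac tostdin H := rewrite -?R0E -?R1E -?RminusE -?RoppE -?RplusE -?RmultE -?RdivE -?RinvE in H.

Lemma hval_g1 t x : (x + 1 <= t)%coqR -> CX.hval t x = CX.g1 x.
Proof. move=> h. rewrite /CX.hval. by case: Rle_dec. Qed.

Lemma hval_g2 t x : (t < x + 1)%coqR -> CX.hval t x = CX.g2 t x.
Proof. move=> h. rewrite /CX.hval. case: Rle_dec => // h'. exfalso. Lra.lra. Qed.

Lemma meas_sup t : (1 < t)%coqR ->
  measurable_fun (`]0%R, +oo[ : set (Real.sort R)) (fun x : Real.sort R => sup_deriv_line (ftilde t) x).
Proof.
move=> ht1. have ht : (0 < t)%coqR by Lra.lra.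
have htm : (0 < t - 1)%coqR by Lra.lra.
have E' := (@itv_bndbnd_setU _ _ (BRight 0%R) (BRight (t - 1)%coqR) (BInfty _ false))
  (ltac:(by rewrite bnd_simp; apply/RleP; tostd; Lra.lra)) (ltac:(by rewrite bnd_simp)).
apply: (eq_measurable_fun (fun x : Real.sort R => (CX.hval t x)%:E)).
  move=> x; rewrite inE /= in_itv /= andbT => /RltP hx. have {}hx : (0 < x)%coqR := hx.
  rewrite sup_line //. tostd. Lra.lra.
apply/measurable_EFinP. rewrite E'. apply/measurable_funU => //. split.
+ apply: (eq_measurable_fun (CX.g1 : Real.sort R -> Real.sort R)).
    move=> x; rewrite inE /= in_itv /= => /andP [/RltP hx1 /RleP hx2].
    have {}hx1 : (0 < x)%coqR := hx1. have {}hx2 : (x <= t - 1)%coqR := hx2.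
    rewrite hval_g1 //. Lra.lra.
  apply: meas_on => //.
  * move=> x /=; rewrite !in_itv /= andbT => /andP [/RltP hx _]. have {}hx : (0 < x)%coqR := hx.
    apply/RltP. have : (-1 < x)%coqR by Lra.lra. exact.
  * move=> x hx. exact: CX.g1_cont.
+ apply: (eq_measurable_fun (CX.g2 t : Real.sort R -> Real.sort R)).
    move=> x; rewrite inE /= in_itv /= andbT => /RltP hx.
    have {}hx : (t - 1 < x)%coqR := hx.
    rewrite hval_g2 //. Lra.lra.
  apply: meas_on => //.
  * move=> x /=; rewrite !in_itv /= !andbT => /RltP hx. have {}hx : (t - 1 < x)%coqR := hx.
    apply/RltP. have : (-1 < x)%coqR by Lra.lra. exact.
  * move=> x hx. exact: CX.g2_cont.
Qed.

Lemma int_case2 t : (1 < t)%coqR ->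
  \int[lebesgue_measure]_(x in `]0%R, +oo[) sup_deriv_line (ftilde t) x =
  (Rtrigo_def.exp (-1) * Rpower.ln t + (1 - Rtrigo_def.exp (-1)))%coqR%:E.
Proof.
move=> ht1. have ht : (0 < t)%coqR by Lra.lra.
have htm : (0 < t - 1)%coqR by Lra.lra.
have E := (@itv_bndbnd_setU _ _ (BRight 0%R) (BRight (t - 1)%coqR) (BInfty _ false)).
rewrite E; last 2 first.
  by rewrite bnd_simp; apply/RleP; tostd; Lra.lra.
  by rewrite bnd_simp.
have E' := E (ltac:(by rewrite bnd_simp; apply/RleP; tostd; Lra.lra)) (ltac:(by rewrite bnd_simp)).
rewrite ge0_integral_setU //; last 3 first.
- rewrite -E'. exact: meas_sup.
- move=> x; rewrite -E' /= in_itv /= andbT => /RltP hx. have {}hx : (0 < x)%coqR := hx.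
  rewrite sup_line //; last by tostd; Lra.lra.
  rewrite lee_fin. apply/RleP. apply: CX.hval_ge0 => //. Lra.lra.
- apply/disj_setPS => x [] /=; rewrite !in_itv /= andbT => /andP [_ h1] h2.
  by have := lt_le_trans h2 h1; rewrite ltxx.
have IA : \int[lebesgue_measure]_(x in `]0%R, (t - 1)%coqR]) sup_deriv_line (ftilde t) x =
    (Rtrigo_def.exp (-1) * Rpower.ln t)%coqR%:E.
  transitivity (\int[lebesgue_measure]_(x in `]0%R, (t - 1)%coqR]) (CX.g1 x)%:E).
    apply: eq_integral => x; rewrite inE /= in_itv /= => /andP [/RltP hx1 /RleP hx2].
    have {}hx1 : (0 < x)%coqR := hx1. have {}hx2 : (x <= t - 1)%coqR := hx2.
    rewrite sup_line //; last by Lra.lra.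
    rewrite hval_g1 //. Lra.lra.
  rewrite integral_itv_obnd_cbnd; last first.
    apply/measurable_EFinP. apply: meas_on => //.
    - move=> x /=; rewrite !in_itv /= andbT => /andP [/RltP hx _]. have {}hx : (0 < x)%coqR := hx.
      apply/RltP. have : (-1 < x)%coqR by Lra.lra. exact.
    - move=> x hx. exact: CX.g1_cont.
  rewrite (@continuous_FTC2 R CX.g1 CX.F2 0 (t - 1)%coqR).
  - by rewrite CX.F2_tm1 CX.F2_0 -EFinB subr0.
  - apply/RltP. exact htm.
  - apply: continuous_in_subspaceT => x; rewrite inE /= in_itv /= => /andP [/RleP hx _].
    have {}hx : (0 <= x)%coqR := hx.
    apply/continuity_pt_cvg. apply: CX.g1_cont. Lra.lra.
  - split.
    + move=> x; rewrite in_itv /= => /andP [/RltP hx _]. have {}hx : (0 < x)%coqR := hx.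
      have hx1 : (-1 < x)%coqR by Lra.lra. exact: (@bridge _ _ _ (CX.F2_der x hx1)).1.
    + apply: cvg_at_right_filter. apply/continuity_pt_cvg. apply: CX.F2_cont. have h : (-1 < 0)%coqR by Lra.lra. exact h.
    + apply: cvg_at_left_filter. apply/continuity_pt_cvg. apply: CX.F2_cont. Lra.lra.
  - move=> x; rewrite in_itv /= => /andP [/RltP hx _]. have {}hx : (0 < x)%coqR := hx.
    have hx1 : (-1 < x)%coqR by Lra.lra. exact: (@bridge _ _ _ (CX.F2_der x hx1)).2.
have IB : \int[lebesgue_measure]_(x in `](t - 1)%coqR, +oo[) sup_deriv_line (ftilde t) x =
    (1 - Rtrigo_def.exp (-1))%coqR%:E.
  transitivity (\int[lebesgue_measure]_(x in `](t - 1)%coqR, +oo[) (CX.g2 t x)%:E).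
    apply: eq_integral => x; rewrite inE /= in_itv /= andbT => /RltP hx.
    have {}hx : (t - 1 < x)%coqR := hx.
    rewrite sup_line //; last by Lra.lra.
    rewrite hval_g2 //. Lra.lra.
  rewrite integral_itv_obnd_cbnd; last first.
    apply/measurable_EFinP. apply: meas_on => //.
    - move=> x /=; rewrite !in_itv /= !andbT => /RltP hx. have {}hx : (t - 1 < x)%coqR := hx.
      apply/RltP. have : (-1 < x)%coqR by Lra.lra. exact.
    - move=> x hx. exact: CX.g2_cont.
  rewrite (@ge0_continuous_FTC2y R (CX.g2 t) (CX.F1 t) (t - 1)%coqR 1).
  - by rewrite CX.F1_tm1 // -EFinB.
  - move=> x /RleP hx. have {}hx : (t - 1 <= x)%coqR := hx. apply/RleP. apply: CX.g2_ge0 => //. Lra.lra.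
  - apply: continuous_in_subspaceT => x; rewrite inE /= in_itv /= andbT => /RleP hx.
    have {}hx : (t - 1 <= x)%coqR := hx.
    apply/continuity_pt_cvg. apply: CX.g2_cont. Lra.lra.
  - apply/cvgrPdist_lt => e e0. have e0' : (0 < e)%coqR by apply/RltP.
    exists (Rdiv t e); split; first by rewrite num_real.
    move=> x /RltP hx. rewrite -RabsE. apply/RltP. exact: CX.F1_lim_bound.
  - move=> x /RltP hx. have {}hx : (t - 1 < x)%coqR := hx. have hx1 : (-1 < x)%coqR by Lra.lra. exact: (@bridge _ _ _ (CX.F1_der t x hx1)).1.
  - apply: cvg_at_right_filter. apply/continuity_pt_cvg. apply: CX.F1_cont. Lra.lra.
  - move=> x; rewrite in_itv /= andbT => /RltP hx. have {}hx : (t - 1 < x)%coqR := hx. have hx1 : (-1 < x)%coqR by Lra.lra. exact: (@bridge _ _ _ (CX.F1_der t x hx1)).2.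
by rewrite IA IB -EFinD.
Qed.

From mathcomp Require Import ring.

Theorem lemma3p4 (t : R) (ht : (0 < t)%R) :
  Bnorm (ftilde t) =
  (if Rle_dec t 1 then (2 - Rtrigo_def.exp (- t))%R
   else (2 - Rtrigo_def.exp (-1) + Rtrigo_def.exp (-1) * Rpower.ln t)%R)%:E.
Proof.
have ht' : (0 < t)%coqR by apply/RltP.
rewrite /Bnorm sup_half //.
case: Rle_dec => h.
- rewrite int_case1 // -EFinD. congr EFin.
  
  rewrite !RminusE ?RplusE ?RoppE ?R1E. ring.
- rewrite int_case2; last by Lra.lra.
  rewrite -EFinD. congr EFin.
  have e1 : Rtrigo_def.exp (-1)%coqR = Rtrigo_def.exp (-1)%R by [].
  rewrite e1 ?RminusE ?RplusE ?RmultE ?R1E. ring.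
Qed.
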